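(* Let $T>0$, $a,f\in C^1([0,T])$ with $a(t)\ge\alpha>0$ on $[0,T]$. For $0<\varepsilon\le1$ let $u_\varepsilon$ be the solution of $\varepsilon u_\varepsilon'+au_\varepsilon=f$ on $(0,T]$ with initial value $u_\varepsilon(0)$, where $|u_\varepsilon(0)|\le K$ with $K$ independent of $\varepsilon$. For each $N\ge1$ let $0=t_0<t_1<\dots<t_N=T$ be a (possibly non-uniform) mesh $\Omega^N$ with $h_j=t_j-t_{j-1}\le C_0N^{-1}$ for all $1\le j\le N$, where $C_0$ is independent of $N$. Let $U^N_\varepsilon=(U_j)_{j=0}^N$ be the solution of the fitted backward Euler scheme $$\varepsilon\sigma_j\frac{U_j-U_{j-1}}{h_j}+a_jU_j=f(t_j),\quad 1\le j\le N,\qquad U_0=u_\varepsilon(0),$$ where $a_j=a(t_j)$, $\rho_j=h_j/\varepsilon$ and $\sigma_j=\dfrac{a_j\rho_j}{e^{a_j\rho_j}-1}$. Then there is a constant $C$, independent of $\varepsilon$ and $N$, such that for all $N\ge1$ $$\sup_{0<\varepsilon\le1}\ \max_{0\le j\le N}|U_j-u_\varepsilon(t_j)|\le CN^{-1}.$$ *)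

(* Defs.v *)
From Stdlib Require Import Reals.
From Coquelicot Require Import Coquelicot.
Open Scope R_scope.

Definition Icc (a b : R) (x : R) : Prop := a <= x <= b.

Definition is_derive_within (D : R -> Prop) (f : R -> R) (x l : R) : Prop :=
  filterlim (fun y => (f y - f x) / (y - x))
    (within (fun y => D y /\ y <> x) (locally x)) (locally l).

Definition continuous_within (D : R -> Prop) (f : R -> R) (x : R) : Prop :=
  filterlim f (within D (locally x)) (locally (f x)).

(* f ∈ C^1([a,b]): differentiable on [a,b] (one-sided at the endpoints)
   with a derivative that is continuous on [a,b]. *)
Definition C1_on (a b : R) (f : R -> R) : Prop :=
  exists df : R -> R,
    (forall x, Icc a b x -> is_derive_within (Icc a b) f x (df x)) /\
    (forall x, Icc a b x -> continuous_within (Icc a b) df x).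

(* u solves  eps u' + a u = f  on (0,T], with u continuous at 0 (initial value u(0)). *)
Definition is_solution (T eps : R) (a f u : R -> R) : Prop :=
  continuous_within (Icc 0 T) u 0 /\
  forall t, 0 < t <= T ->
    exists du, is_derive_within (Icc 0 T) u t du /\ eps * du + a t * u t = f t.

Definition sigma (aj hj eps : R) : R :=
  let r := aj * (hj / eps) in r / (exp r - 1).

Definition is_mesh (T C0 : R) (N : nat) (tN : nat -> R) : Prop :=
  tN 0%nat = 0 /\ tN N = T /\
  forall j, (1 <= j <= N)%nat ->
    tN (j - 1)%nat < tN j /\ tN j - tN (j - 1)%nat <= C0 / INR N.

Definition is_fitted_scheme (eps : R) (a f : R -> R) (N : nat) (tN : nat -> R)
    (u0 : R) (U : nat -> R) : Prop :=
  U 0%nat = u0 /\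
  forall j, (1 <= j <= N)%nat ->
    let hj := tN j - tN (j - 1)%nat in
    eps * sigma (a (tN j)) hj eps * (U j - U (j - 1)%nat) / hj + a (tN j) * U j
      = f (tN j).

(* Main.v *)
Require Import Defs.
From Stdlib Require Import Reals Lra Lia Classical.
From Coquelicot Require Import Coquelicot.
Open Scope R_scope.

Definition D_ed (D : R -> Prop) (y : R -> R) (x l : R) : Prop :=
  forall e, 0 < e -> exists d, 0 < d /\ forall z, D z -> z <> x -> Rabs (z - x) < d ->
    Rabs ((y z - y x) / (z - x) - l) < e.

Definition C_ed (D : R -> Prop) (y : R -> R) (x : R) : Prop :=
  forall e, 0 < e -> exists d, 0 < d /\ forall z, D z -> Rabs (z - x) < d ->
    Rabs (y z - y x) < e.

Lemma filterlim_within_ed (D : R -> Prop) (g : R -> R) x l :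
  filterlim g (within D (locally x)) (locally l) ->
  forall e, 0 < e -> exists d, 0 < d /\ forall z, D z -> Rabs (z - x) < d ->
    Rabs (g z - l) < e.
Proof.
  intros H e He.
  assert (Hl : locally l (fun v => Rabs (v - l) < e)).
  { exists (mkposreal e He). intros v Hv. exact Hv. }
  specialize (H _ Hl). destruct H as [d Hd].
  exists d. split. apply cond_pos. intros z Dz Hz. exact (Hd z Hz Dz).
Qed.

Lemma deriv_to_ed D y x l : is_derive_within D y x l -> D_ed D y x l.
Proof.
  intros H e He. destruct (filterlim_within_ed _ _ _ _ H e He) as [d [Hd H']].
  exists d; split; [auto|]. intros z Dz Hz Hzd. apply H'; auto.
Qed.

Lemma cont_to_ed D y x : continuous_within D y x -> C_ed D y x.
Proof.
  intros H e He. destruct (filterlim_within_ed _ _ _ _ H e He) as [d [Hd H']].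
  exists d; split; auto.
Qed.

Lemma D_ed_sub (D D' : R -> Prop) y x l : (forall z, D' z -> D z) -> D_ed D y x l -> D_ed D' y x l.
Proof.
  intros HD H e He. destruct (H e He) as [d [Hd H']]. exists d; split; auto.
Qed.

Lemma C_ed_sub (D D' : R -> Prop) y x : (forall z, D' z -> D z) -> C_ed D y x -> C_ed D' y x.
Proof.
  intros HD H e He. destruct (H e He) as [d [Hd H']]. exists d; split; auto.
Qed.

Lemma D_ed_of_lim y x l : derivable_pt_lim y x l -> D_ed (fun _ => True) y x l.
Proof.
  intros H e He. destruct (H e He) as [d Hd]. exists d; split. apply cond_pos.
  intros z _ Hz Hzd. replace z with (x + (z - x)) at 1 by ring.
  apply Hd; auto. lra.
Qed.

Lemma D_ed_minus D y1 y2 x l1 l2 : D_ed D y1 x l1 -> D_ed D y2 x l2 ->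
  D_ed D (fun z => y1 z - y2 z) x (l1 - l2).
Proof.
  intros H1 H2 e He.
  destruct (H1 (e/2)) as [d1 [Hd1 H1']]; [lra|].
  destruct (H2 (e/2)) as [d2 [Hd2 H2']]; [lra|].
  exists (Rmin d1 d2); split. apply Rmin_pos; auto.
  intros z Dz Hz Hzd.
  assert (A1 := H1' z Dz Hz (Rlt_le_trans _ _ _ Hzd (Rmin_l _ _))).
  assert (A2 := H2' z Dz Hz (Rlt_le_trans _ _ _ Hzd (Rmin_r _ _))).
  replace ((y1 z - y2 z - (y1 x - y2 x)) / (z - x) - (l1 - l2)) with
    (((y1 z - y1 x) / (z - x) - l1) - ((y2 z - y2 x) / (z - x) - l2)).
  2:{ field. intro; apply Hz; lra. }
  eapply Rle_lt_trans. apply Rabs_triang. rewrite Rabs_Ropp. lra.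
Qed.

Lemma C_ed_minus D y1 y2 x : C_ed D y1 x -> C_ed D y2 x ->
  C_ed D (fun z => y1 z - y2 z) x.
Proof.
  intros H1 H2 e He.
  destruct (H1 (e/2)) as [d1 [Hd1 H1']]; [lra|].
  destruct (H2 (e/2)) as [d2 [Hd2 H2']]; [lra|].
  exists (Rmin d1 d2); split. apply Rmin_pos; auto.
  intros z Dz Hzd.
  assert (A1 := H1' z Dz (Rlt_le_trans _ _ _ Hzd (Rmin_l _ _))).
  assert (A2 := H2' z Dz (Rlt_le_trans _ _ _ Hzd (Rmin_r _ _))).
  replace (y1 z - y2 z - (y1 x - y2 x)) with ((y1 z - y1 x) - (y2 z - y2 x)) by ring.
  eapply Rle_lt_trans. apply Rabs_triang. rewrite Rabs_Ropp. lra.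
Qed.

Lemma C_of_D D y x l : D_ed D y x l -> C_ed D y x.
Proof.
  intros H e He.
  destruct (H 1 Rlt_0_1) as [d [Hd H']].
  exists (Rmin d (e / (Rabs l + 1))); split.
  { apply Rmin_pos; auto. apply Rdiv_lt_0_compat; auto. pose proof (Rabs_pos l); lra. }
  intros z Dz Hzd.
  destruct (Req_dec z x) as [->|Hz]. { rewrite Rminus_diag, Rabs_R0; auto. }
  assert (A := H' z Dz Hz (Rlt_le_trans _ _ _ Hzd (Rmin_l _ _))).
  assert (B := Rlt_le_trans _ _ _ Hzd (Rmin_r _ _)).
  set (Q := (y z - y x) / (z - x)) in A.
  assert (E : y z - y x = Q * (z - x)). { unfold Q; field. intro; apply Hz; lra. }
  rewrite E, Rabs_mult.
  assert (HQ : Rabs Q <= Rabs l + 1).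
  { replace Q with ((Q - l) + l) by ring. eapply Rle_trans. apply Rabs_triang. lra. }
  assert (Hp : 0 < Rabs l + 1) by (pose proof (Rabs_pos l); lra).
  apply (Rmult_lt_compat_l (Rabs l + 1)) in B; auto.
  replace ((Rabs l + 1) * (e / (Rabs l + 1))) with e in B by (field; lra).
  assert (0 <= Rabs (z - x)) by apply Rabs_pos.
  nra.
Qed.

Lemma not_ub_ex (E : R -> Prop) b : ~ is_upper_bound E b -> exists w, E w /\ b < w.
Proof.
  intros H. apply NNPP. intro H'. apply H. intros w Ew.
  destruct (Rle_dec w b) as [h|h]; auto. exfalso; apply H'. exists w. split; auto. lra.
Qed.

Lemma sign_lemma p q (y : R -> R) :
  p <= q ->
  C_ed (Icc p q) y p ->
  (forall x, p < x <= q -> exists l, D_ed (Icc p q) y x l /\ (0 < y x -> l < 0)) ->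
  y p <= 0 -> y q <= 0.
Proof.
  intros Hpq Hcp HD Hyp.
  destruct (Rle_dec (y q) 0) as [h|h]; auto. exfalso.
  set (c := y q).
  assert (Hc : 0 < c) by (unfold c; lra).
  set (E := fun w => p <= - w <= q /\ forall z, - w <= z <= q -> c <= y z).
  assert (Eq : E (- q)). { split. lra. intros z Hz. rewrite Ropp_involutive in Hz.
    replace z with q by lra. unfold c; lra. }
  assert (Hb : bound E). { exists (- p). intros w [Hw _]. lra. }
  destruct (completeness E Hb (ex_intro _ _ Eq)) as [m [Hub Hlub]].
  set (s := - m).
  assert (Hsq : s <= q). { unfold s. assert (- q <= m) by (apply Hub; auto). lra. }
  assert (Hps : p <= s). { unfold s. assert (m <= - p). { apply Hlub. intros w [Hw _]. lra. } lra. }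
  assert (A : forall z, s < z <= q -> c <= y z).
  { intros z Hz. assert (~ is_upper_bound E (- z)).
    { intro Hu. specialize (Hlub _ Hu). unfold s in Hz. lra. }
    destruct (not_ub_ex _ _ H) as [w [[_ Ew] Hw]]. apply Ew. lra. }
  assert (Cs : C_ed (Icc p q) y s).
  { destruct (Req_dec s p) as [->|Hne]; auto.
    destruct (HD s) as [l [Hl _]]. lra. exact (C_of_D _ _ _ _ Hl). }
  assert (B : c <= y s).
  { destruct (Req_dec s q) as [->|Hne]. unfold c; lra.
    destruct (Rle_dec c (y s)) as [h'|h']; auto. exfalso.
    destruct (Cs (c - y s)) as [d [Hd Hd']]. lra.
    set (z := Rmin q (s + d / 2)).
    assert (Hz1 : s < z). { unfold z. apply Rmin_glb_lt; lra. }
    assert (Hz2 : z <= q) by apply Rmin_l.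
    assert (Hz3 : z <= s + d/2) by apply Rmin_r.
    assert (Az := A z (conj Hz1 Hz2)).
    assert (Bz : Rabs (y z - y s) < c - y s).
    { apply Hd'. split; lra. rewrite Rabs_right; lra. }
    apply Rabs_def2 in Bz. lra. }
  assert (Hsp : p < s). { destruct (Req_dec s p) as [Hx|Hx]. rewrite Hx in B. lra. lra. }
  destruct (HD s) as [l [Hl Hls]]. lra.
  assert (Hl0 : l < 0) by (apply Hls; lra).
  destruct (Hl (- l)) as [d [Hd Hd']]. lra.
  set (z0 := Rmax p (s - d / 2)).
  assert (Hz0s : z0 < s). { unfold z0. apply Rmax_lub_lt; lra. }
  assert (Hz0p : p <= z0) by apply Rmax_l.
  assert (Hz0d : s - d/2 <= z0) by apply Rmax_r.
  assert (Ez0 : E (- z0)).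
  { split. lra. intros z Hz. rewrite Ropp_involutive in Hz.
    destruct (Rlt_le_dec s z) as [h1|h1]. apply A; lra.
    destruct (Req_dec z s) as [->|h2]. auto.
    assert (Q := Hd' z (conj (Rle_trans _ _ _ Hz0p (proj1 Hz)) (Rle_trans _ _ _ h1 Hsq)) h2 ltac:(rewrite Rabs_left; lra)).
    set (Qv := (y z - y s) / (z - s)) in Q.
    assert (Ev : y z - y s = Qv * (z - s)). { unfold Qv; field. lra. }
    apply Rabs_def2 in Q. nra. }
  assert (Hm := Hub _ Ez0). unfold s in Hz0s. lra.
Qed.

Lemma bounded_on p q (g : R -> R) :
  p <= q -> (forall x, p <= x <= q -> C_ed (Icc p q) g x) ->
  exists M, forall x, p <= x <= q -> Rabs (g x) <= M.
Proof.
  intros Hpq Hc.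
  set (E := fun x => p <= x <= q /\ exists M, forall z, p <= z <= x -> Rabs (g z) <= M).
  assert (Ep : E p). { split. lra. exists (Rabs (g p)). intros z Hz. replace z with p by lra. lra. }
  assert (Hb : bound E). { exists q. intros w [Hw _]. lra. }
  destruct (completeness E Hb (ex_intro _ _ Ep)) as [m [Hub Hlub]].
  assert (Hpm : p <= m) by (apply Hub; auto).
  assert (Hmq : m <= q). { apply Hlub. intros w [Hw _]. lra. }
  destruct (Hc m (conj Hpm Hmq) 1 Rlt_0_1) as [d [Hd Hd']].
  assert (~ is_upper_bound E (m - d)). { intro Hu. specialize (Hlub _ Hu). lra. }
  destruct (not_ub_ex _ _ H) as [x0 [[Hx0 [M0 HM0]] Hx0m]].
  set (x1 := Rmin q (m + d / 2)).
  assert (Ex1 : forall z, p <= z <= x1 -> Rabs (g z) <= Rmax M0 (Rabs (g m) + 1)).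
  { intros z Hz. destruct (Rle_dec z x0) as [h|h].
    - eapply Rle_trans. apply HM0; lra. apply Rmax_l.
    - eapply Rle_trans. 2: apply Rmax_r.
      assert (Hx1 : x1 <= m + d/2) by apply Rmin_r.
      assert (Hx1q : x1 <= q) by apply Rmin_l.
      assert (Hz' : Rabs (g z - g m) < 1). { apply Hd'. split; lra.
        apply Rabs_def1; lra. }
      assert (Rabs (g z) <= Rabs (g z - g m) + Rabs (g m)).
      { replace (g z) with ((g z - g m) + g m) at 1 by ring. apply Rabs_triang. }
      lra. }
  destruct (Rle_dec q (m + d/2)) as [h|h].
  - exists (Rmax M0 (Rabs (g m) + 1)). intros x Hx. apply Ex1.
    unfold x1. rewrite Rmin_left; lra.
  - exfalso. assert (E x1). { split. split. unfold x1. apply Rmin_glb; lra. apply Rmin_l.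
      exists (Rmax M0 (Rabs (g m) + 1)). exact Ex1. }
    assert (Hx := Hub _ H0). unfold x1 in Hx. rewrite Rmin_right in Hx; lra.
Qed.

Lemma D_ed_lim D y x l : derivable_pt_lim y x l -> D_ed D y x l.
Proof. intros H. apply (D_ed_sub (fun _ => True)); auto. apply D_ed_of_lim; auto. Qed.

Lemma one_side T (h dh : R -> R) L p q :
  0 <= p <= q -> q <= T ->
  (forall x, 0 <= x <= T -> D_ed (Icc 0 T) h x (dh x)) ->
  (forall x, 0 <= x <= T -> dh x < L) -> h q - h p <= L * (q - p).
Proof.
  intros Hpq HqT HD Hl.
  set (lin := fun z => h p + L * (z - p)).
  assert (Dlin : forall x, derivable_pt_lim lin x L).
  { intros x. apply is_derive_Reals. unfold lin. auto_derive; auto. ring. }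
  assert (sub : forall z, Icc p q z -> Icc 0 T z). { intros z [H1 H2]; split; lra. }
  assert (K := sign_lemma p q (fun z => h z - lin z) ltac:(lra)).
  cbv beta in K. unfold lin at 2 in K.
  replace (h q - h p) with (h q - lin q + L * (q - p)) by (unfold lin; ring).
  enough (h q - lin q <= 0) by lra.
  apply K.
  - apply C_ed_minus. apply (C_of_D _ _ _ (dh p)). apply (D_ed_sub _ _ _ _ _ sub). apply HD; lra.
    apply (C_of_D _ _ _ L). apply D_ed_lim. auto.
  - intros x Hx. exists (dh x - L). split.
    apply D_ed_minus. apply (D_ed_sub _ _ _ _ _ sub). apply HD; lra. apply D_ed_lim; auto.
    intros _. specialize (Hl x ltac:(lra)). lra.
  - unfold lin. lra.
Qed.

Lemma lip_C1 T g : 0 < T -> C1_on 0 T g ->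
  exists L, 0 <= L /\ forall x y, 0 <= x <= T -> 0 <= y <= T -> Rabs (g x - g y) <= L * Rabs (x - y).
Proof.
  intros HT [dg [Hd Hc]].
  destruct (bounded_on 0 T dg ltac:(lra)) as [B HB].
  { intros x Hx. apply cont_to_ed. apply Hc. exact Hx. }
  exists (Rabs B + 1). split. pose proof (Rabs_pos B); lra.
  assert (Hlt : forall x, 0 <= x <= T -> dg x < Rabs B + 1).
  { intros x Hx. specialize (HB x Hx). pose proof (Rle_abs (dg x)). pose proof (Rle_abs B). lra. }
  assert (Hlt' : forall x, 0 <= x <= T -> 0 - dg x < Rabs B + 1).
  { intros x Hx. specialize (HB x Hx). pose proof (Rle_abs (- dg x)). rewrite Rabs_Ropp in H.
    pose proof (Rle_abs B). lra. }
  assert (D1 : forall x, 0 <= x <= T -> D_ed (Icc 0 T) g x (dg x)).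
  { intros x Hx. apply deriv_to_ed. apply Hd. exact Hx. }
  assert (D2 : forall x, 0 <= x <= T -> D_ed (Icc 0 T) (fun z => 0 - g z) x (0 - dg x)).
  { intros x Hx. apply D_ed_minus. apply D_ed_lim. apply derivable_pt_lim_const. auto. }
  assert (G : forall p q, 0 <= p <= q -> q <= T -> Rabs (g q - g p) <= (Rabs B + 1) * (q - p)).
  { intros p q H1 H2.
    assert (A1 := one_side T g dg _ p q H1 H2 D1 Hlt).
    assert (A2 := one_side T (fun z => 0 - g z) (fun x => 0 - dg x) _ p q H1 H2 D2 Hlt').
    apply Rabs_le. lra. }
  intros x y Hx Hy. destruct (Rle_dec x y) as [h|h].
  - rewrite (Rabs_minus_sym (g x)), (Rabs_minus_sym x). rewrite (Rabs_right (y - x)) by lra.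
    apply G; lra.
  - rewrite (Rabs_right (x - y)) by lra. apply G; lra.
Qed.

Lemma u_cont T eps a f u : is_solution T eps a f u ->
  forall x, 0 <= x <= T -> C_ed (Icc 0 T) u x.
Proof.
  intros [H0 Hd] x Hx. destruct (Req_dec x 0) as [->|Hne].
  - apply cont_to_ed; auto.
  - destruct (Hd x ltac:(lra)) as [du [Hdu _]]. apply (C_of_D _ _ _ du). apply deriv_to_ed; auto.
Qed.

Lemma u_deriv T eps a f u : is_solution T eps a f u ->
  forall x, 0 < x <= T -> exists du, D_ed (Icc 0 T) u x du /\ eps * du + a x * u x = f x.
Proof.
  intros [_ Hd] x Hx. destruct (Hd x Hx) as [du [H1 H2]]. exists du; split; auto.
  apply deriv_to_ed; auto.
Qed.

Lemma upper_lemma T (v : R -> R) M t :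
  0 <= t <= T ->
  (forall x, 0 <= x <= T -> C_ed (Icc 0 T) v x) ->
  (forall x, 0 < x <= T -> exists dv, D_ed (Icc 0 T) v x dv /\ (M < v x -> dv < 0)) ->
  v 0 <= M -> v t <= M.
Proof.
  intros Ht Hc Hd H0.
  assert (sub : forall z, Icc 0 t z -> Icc 0 T z). { intros z [H1 H2]; split; lra. }
  assert (K := sign_lemma 0 t (fun z => v z - M) ltac:(lra)).
  cbv beta in K. enough (v t - M <= 0) by lra. apply K.
  - apply C_ed_minus. apply (C_ed_sub _ _ _ _ sub). apply Hc; lra.
    apply (C_of_D _ _ _ 0). apply D_ed_lim. apply derivable_pt_lim_const.
  - intros x Hx. destruct (Hd x ltac:(lra)) as [dv [Hdv Hs]]. exists (dv - 0). split.
    apply D_ed_minus. apply (D_ed_sub _ _ _ _ _ sub); auto.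
    apply D_ed_lim. apply derivable_pt_lim_const.
    intros Hp. specialize (Hs ltac:(lra)). lra.
  - lra.
Qed.

Lemma u_bound T eps a f u alpha F K :
  0 < eps -> 0 < alpha -> (forall x, 0 <= x <= T -> alpha <= a x) ->
  (forall x, 0 <= x <= T -> Rabs (f x) <= F) -> Rabs (u 0) <= K ->
  is_solution T eps a f u ->
  forall t, 0 <= t <= T -> Rabs (u t) <= Rmax K (F / alpha).
Proof.
  intros He Ha Hab HF HK Hs t Ht.
  set (M := Rmax K (F / alpha)).
  assert (HM1 : K <= M) by apply Rmax_l.
  assert (HM2 : F <= alpha * M).
  { assert (F / alpha <= M) by apply Rmax_r.
    apply (Rmult_le_compat_l alpha) in H; [|lra]. replace (alpha * (F / alpha)) with F in H by (field; lra). lra. }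
  assert (HFp : forall x, 0 <= x <= T -> - F <= f x <= F).
  { intros x Hx. specialize (HF x Hx). apply Rabs_le_between in HF. auto. }
  assert (HM0 : 0 <= M) by (pose proof (Rabs_pos (u 0)); lra).
  apply Rabs_le. split.
  - assert (A : (fun z => 0 - u z) t <= M).
    { apply (upper_lemma T (fun z => 0 - u z) M t); auto.
      - intros x Hx. apply C_ed_minus. apply (C_of_D _ _ _ 0). apply D_ed_lim. apply derivable_pt_lim_const.
        eapply u_cont; eauto.
      - intros x Hx. destruct (u_deriv _ _ _ _ _ Hs x Hx) as [du [Hdu Heq]].
        exists (0 - du). split. apply D_ed_minus; auto. apply D_ed_lim. apply derivable_pt_lim_const.
        intros Hlt. assert (alpha <= a x) by (apply Hab; lra). specialize (HFp x ltac:(lra)).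
        assert (a x * u x <= alpha * u x) by nra.
        assert (0 < eps * du) by nra. nra.
      - apply Rabs_le_between in HK. lra. }
    cbv beta in A. lra.
  - apply (upper_lemma T u M t); auto.
    + eapply u_cont; eauto.
    + intros x Hx. destruct (u_deriv _ _ _ _ _ Hs x Hx) as [du [Hdu Heq]].
      exists du. split; auto.
      intros Hlt. assert (alpha <= a x) by (apply Hab; lra). specialize (HFp x ltac:(lra)).
      assert (a x * u x >= alpha * u x) by nra.
      assert (eps * du < 0) by nra. nra.
    + apply Rabs_le_between in HK. lra.
Qed.

Lemma exp_deriv A B k p x :
  derivable_pt_lim (fun z => A + B * exp (- k * (z - p))) x (B * exp (- k * (x - p)) * (- k)).
Proof. apply is_derive_Reals. auto_derive; auto. unfold Rminus. ring. Qed.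

Lemma local_err T eps a f u aj fj p q Rb :
  0 < eps -> 0 <= p -> p <= q -> q <= T -> 0 < aj ->
  (forall x, 0 <= x <= T -> C_ed (Icc 0 T) u x) ->
  (forall x, 0 < x <= T -> exists du, D_ed (Icc 0 T) u x du /\ eps * du + a x * u x = f x) ->
  (forall x, p <= x <= q -> Rabs (f x - fj) + Rabs (aj - a x) * Rabs (u x) <= Rb) ->
  Rabs (u q - (fj / aj + (u p - fj / aj) * exp (- (aj / eps) * (q - p))))
    <= Rb / aj * (1 - exp (- (aj / eps) * (q - p))).
Proof.
  intros He Hp Hpq HqT Haj Hc Hd HR.
  set (k := aj / eps). set (g := fj / aj).
  assert (sub : forall z, Icc p q z -> Icc 0 T z). { intros z [H1 H2]; split; lra. }
  assert (Hk : eps * k = aj) by (unfold k; field; lra).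
  assert (Hg : aj * g = fj) by (unfold g; field; lra).
  assert (Hr : forall x, p <= x <= q -> (f x - fj) + (aj - a x) * u x <= Rb /\ - Rb <= (f x - fj) + (aj - a x) * u x).
  { intros x Hx. specialize (HR x Hx).
    assert (Rabs ((f x - fj) + (aj - a x) * u x) <= Rb).
    { eapply Rle_trans. apply Rabs_triang. rewrite Rabs_mult. auto. }
    apply Rabs_le_between in H. lra. }
  set (A1 := g + Rb / aj). set (B1 := u p - g - Rb / aj).
  set (A2 := g - Rb / aj). set (B2 := u p - g + Rb / aj).
  set (v1 := fun z => A1 + B1 * exp (- k * (z - p))).
  set (v2 := fun z => A2 + B2 * exp (- k * (z - p))).
  assert (Hv1 : forall x, eps * (B1 * exp (- k * (x - p)) * (- k)) = aj * A1 - aj * v1 x).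
  { intros x. unfold v1. rewrite <- Hk. ring. }
  assert (Hv2 : forall x, eps * (B2 * exp (- k * (x - p)) * (- k)) = aj * A2 - aj * v2 x).
  { intros x. unfold v2. rewrite <- Hk. ring. }
  assert (HA1 : aj * A1 = fj + Rb) by (unfold A1; rewrite Rmult_plus_distr_l, Hg; field; lra).
  assert (HA2 : aj * A2 = fj - Rb) by (unfold A2; unfold Rminus; rewrite Rmult_plus_distr_l, Hg; field; lra).
  assert (C1 : u q - v1 q <= 0).
  { apply (sign_lemma p q (fun z => u z - v1 z)); auto.
    - apply C_ed_minus. apply (C_ed_sub _ _ _ _ sub). apply Hc; lra.
      apply (C_of_D _ _ _ _ (D_ed_lim _ _ _ _ (exp_deriv A1 B1 k p p))).
    - intros x Hx. destruct (Hd x ltac:(lra)) as [du [Hdu Heq]].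
      exists (du - B1 * exp (- k * (x - p)) * (- k)). split.
      apply D_ed_minus. apply (D_ed_sub _ _ _ _ _ sub); auto. apply D_ed_lim. apply exp_deriv.
      intros Hy. specialize (Hv1 x). destruct (Hr x ltac:(lra)) as [R1 R2].
      assert (eps * (du - B1 * exp (- k * (x - p)) * - k) < 0).
      { rewrite Rmult_minus_distr_l, Hv1. nra. }
      nra.
    - unfold v1, A1, B1. rewrite Rminus_diag, Rmult_0_r, exp_0. lra. }
  assert (C2 : v2 q - u q <= 0).
  { apply (sign_lemma p q (fun z => v2 z - u z)); auto.
    - apply C_ed_minus.
      apply (C_of_D _ _ _ _ (D_ed_lim _ _ _ _ (exp_deriv A2 B2 k p p))).
      apply (C_ed_sub _ _ _ _ sub). apply Hc; lra.
    - intros x Hx. destruct (Hd x ltac:(lra)) as [du [Hdu Heq]].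
      exists (B2 * exp (- k * (x - p)) * (- k) - du). split.
      apply D_ed_minus. apply D_ed_lim. apply exp_deriv. apply (D_ed_sub _ _ _ _ _ sub); auto.
      intros Hy. specialize (Hv2 x). destruct (Hr x ltac:(lra)) as [R1 R2].
      assert (eps * (B2 * exp (- k * (x - p)) * - k - du) < 0).
      { rewrite Rmult_minus_distr_l, Hv2. nra. }
      nra.
    - unfold v2, A2, B2. rewrite Rminus_diag, Rmult_0_r, exp_0. lra. }
  unfold v1, v2, A1, A2, B1, B2 in *. fold k. fold g.
  replace (- (aj / eps) * (q - p)) with (- k * (q - p)) by (unfold k; ring).
  apply Rabs_le. split; nra.
Qed.

Lemma scheme_step eps aj hj fj X Y :
  0 < eps -> 0 < aj -> 0 < hj ->
  eps * Defs.sigma aj hj eps * (X - Y) / hj + aj * X = fj ->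
  X = exp (- (aj / eps) * hj) * Y + (1 - exp (- (aj / eps) * hj)) * (fj / aj).
Proof.
  intros He Ha Hh H. unfold Defs.sigma in H. cbv zeta in H.
  set (r := aj * (hj / eps)) in H.
  assert (Hr : 0 < r) by (unfold r; apply Rmult_lt_0_compat; auto; apply Rdiv_lt_0_compat; auto).
  set (E := exp r) in H.
  assert (HE : 1 < E) by (unfold E; rewrite <- exp_0; apply exp_increasing; auto).
  replace (- (aj / eps) * hj) with (- r) by (unfold r; field; lra).
  rewrite exp_Ropp. fold E.
  replace (eps * (r / (E - 1)) * (X - Y) / hj) with (aj * (X - Y) / (E - 1)) in H
    by (unfold r; field; repeat split; lra).
  assert (H' : aj * (X - Y) + aj * X * (E - 1) = fj * (E - 1)).
  { rewrite <- H. field. lra. }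
  apply (Rmult_eq_reg_l (aj * E)); [| nra].
  replace (aj * E * (/ E * Y + (1 - / E) * (fj / aj))) with (aj * Y + (E - 1) * fj) by (field; lra).
  nra.
Qed.

Theorem theorem1
  (T alpha K C0 : R) (a f : R -> R) (u : R -> R -> R) (t : nat -> nat -> R)
  (hT : 0 < T)
  (ha : C1_on 0 T a) (hf : C1_on 0 T f)
  (halpha : 0 < alpha) (hab : forall x, 0 <= x <= T -> alpha <= a x)
  (hu : forall eps, 0 < eps <= 1 -> is_solution T eps a f (u eps))
  (hK : forall eps, 0 < eps <= 1 -> Rabs (u eps 0) <= K)
  (hmesh : forall N, (1 <= N)%nat -> is_mesh T C0 N (t N)) :
  exists C : R,
    forall (N : nat), (1 <= N)%nat ->
    forall eps, 0 < eps <= 1 ->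
    forall U : nat -> R, is_fitted_scheme eps a f N (t N) (u eps 0) U ->
    forall j, (j <= N)%nat ->
      Rabs (U j - u eps (t N j)) <= C / INR N.
Proof.
  destruct (lip_C1 T a hT ha) as [La [HLa0 HLa]].
  destruct (lip_C1 T f hT hf) as [Lf [HLf0 HLf]].
  set (F := Rabs (f 0) + Lf * T).
  assert (HF : forall x, 0 <= x <= T -> Rabs (f x) <= F).
  { intros x Hx. specialize (HLf x 0 Hx ltac:(lra)).
    rewrite Rminus_0_r, (Rabs_right x) in HLf by lra.
    assert (Rabs (f x) <= Rabs (f x - f 0) + Rabs (f 0)).
    { replace (f x) with ((f x - f 0) + f 0) at 1 by ring. apply Rabs_triang. }
    unfold F. nra. }
  set (M := Rmax K (F / alpha)).
  assert (HM : forall eps, 0 < eps <= 1 -> forall x, 0 <= x <= T -> Rabs (u eps x) <= M).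
  { intros eps He x Hx. apply (u_bound T eps a f (u eps) alpha F K); auto; lra. }
  assert (HM0 : 0 <= M).
  { unfold M. eapply Rle_trans. 2: apply Rmax_l.
    eapply Rle_trans. apply Rabs_pos. apply (hK 1). lra. }
  set (c := (La * M + Lf) / alpha).
  assert (Hc0 : 0 <= c). { unfold c. apply Rdiv_le_0_compat; auto. nra. }
  exists (c * C0).
  intros N HN eps Heps U [HU0 HUj].
  destruct (hmesh N HN) as [Ht0 [HtN Hm]].
  assert (HNpos : 0 < INR N) by (apply lt_0_INR; lia).
  assert (Hpos : forall j, (j <= N)%nat -> 0 <= t N j).
  { induction j; intros Hj. lra.
    destruct (Hm (S j) ltac:(lia)) as [A _]. replace (S j - 1)%nat with j in A by lia.
    specialize (IHj ltac:(lia)). lra. }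
  assert (HleT : forall k, (k <= N)%nat -> t N (N - k)%nat <= T).
  { induction k; intros Hk. rewrite Nat.sub_0_r. lra.
    destruct (Hm (N - k)%nat ltac:(lia)) as [A _]. replace (N - k - 1)%nat with (N - S k)%nat in A by lia.
    specialize (IHk ltac:(lia)). lra. }
  assert (Hle : forall j, (j <= N)%nat -> t N j <= T).
  { intros j Hj. replace j with (N - (N - j))%nat by lia. apply HleT. lia. }
  set (H := C0 / INR N).
  assert (HH : 0 <= H).
  { destruct (Hm 1%nat ltac:(lia)) as [A B]. fold H in B. lra. }
  assert (Hs := hu eps Heps).
  assert (Claim : forall j, (j <= N)%nat -> Rabs (U j - u eps (t N j)) <= c * H).
  { induction j; intros Hj.
    - rewrite HU0, Ht0, Rminus_diag, Rabs_R0. nra.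
    - specialize (IHj ltac:(lia)).
      destruct (Hm (S j) ltac:(lia)) as [Hlt Hh]. specialize (HUj (S j) ltac:(lia)).
      cbv zeta in HUj. replace (S j - 1)%nat with j in Hlt, Hh, HUj by lia.
      set (p := t N j) in *. set (q := t N (S j)) in *.
      assert (Hp0 : 0 <= p) by (apply Hpos; lia).
      assert (HqT : q <= T) by (apply Hle; lia).
      set (aj := a q) in *. set (fj := f q) in *.
      assert (Haj : alpha <= aj) by (apply hab; lra).
      assert (Step := scheme_step eps aj (q - p) fj (U (S j)) (U j) ltac:(lra) ltac:(lra) ltac:(lra) HUj).
      set (e := exp (- (aj / eps) * (q - p))) in *.
      assert (He1 : e <= 1).
      { unfold e. rewrite <- exp_0. destruct (Rle_dec (- (aj / eps) * (q - p)) 0) as [h|h].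
        destruct h as [h|h]. left. apply exp_increasing; auto. rewrite h; lra.
        exfalso. apply h. assert (0 < aj / eps) by (apply Rdiv_lt_0_compat; lra). nra. }
      assert (He0 : 0 < e) by apply exp_pos.
      assert (Loc := local_err T eps a f (u eps) aj fj p q ((La * M + Lf) * (q - p))
        ltac:(lra) Hp0 ltac:(lra) HqT ltac:(lra)
        (u_cont _ _ _ _ _ Hs) (u_deriv _ _ _ _ _ Hs)).
      fold e in Loc.
      assert (Loc' : Rabs (u eps q - (fj / aj + (u eps p - fj / aj) * e)) <= (La * M + Lf) * (q - p) / aj * (1 - e)).
      { apply Loc. intros x Hx.
        assert (A1 := HLf x q ltac:(lra) ltac:(lra)).
        assert (A2 := HLa q x ltac:(lra) ltac:(lra)).
        assert (A3 := HM eps Heps x ltac:(lra)).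
        rewrite (Rabs_minus_sym x q), (Rabs_right (q - x)) in A1 by lra.
        rewrite (Rabs_right (q - x)) in A2 by lra.
        fold fj in A1. fold aj in A2.
        assert (Rabs (aj - a x) * Rabs (u eps x) <= La * (q - p) * M).
        { apply Rmult_le_compat; [apply Rabs_pos|apply Rabs_pos| |exact A3]. eapply Rle_trans; [exact A2|]. apply Rmult_le_compat_l; lra. }
        nra. }
      assert (Hb : (La * M + Lf) * (q - p) / aj <= c * H).
      { assert (K0 : 0 <= La * M + Lf) by (apply Rplus_le_le_0_compat; [apply Rmult_le_pos|]; lra).
        unfold c. apply Rle_trans with ((La * M + Lf) * (q - p) / alpha).
        - unfold Rdiv. apply Rmult_le_compat_l. apply Rmult_le_pos; lra.
          apply Rinv_le_contravar; lra.
        - replace ((La * M + Lf) * (q - p) / alpha) with ((La * M + Lf) / alpha * (q - p)) by (field; lra).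
          apply Rmult_le_compat_l. apply Rdiv_le_0_compat; lra. exact Hh. }
      rewrite Step.
      replace (e * U j + (1 - e) * (fj / aj) - u eps q) with
        (e * (U j - u eps p) - (u eps q - (fj / aj + (u eps p - fj / aj) * e))) by ring.
      eapply Rle_trans. apply Rabs_triang. rewrite Rabs_Ropp, Rabs_mult, (Rabs_right e) by lra.
      assert (e * Rabs (U j - u eps p) <= e * (c * H)) by (apply Rmult_le_compat_l; lra).
      assert ((La * M + Lf) * (q - p) / aj * (1 - e) <= c * H * (1 - e)) by (apply Rmult_le_compat_r; lra).
      nra. }
  replace (c * C0 / INR N) with (c * H) by (unfold H; field; lra).
  apply Claim; auto.
Qed.
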